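(* Let $k\ge 1$ be an integer and let $A_k=(a_{ij})_{1\le i,j\le k}$ be the $k\times k$ matrix with entries $a_{ij}=\frac{1}{2}|i-j|$. Let $C_k(\lambda)=\det(A_k-\lambda I_k)$ be its characteristic polynomial. Then $$C_k(\lambda)=(-1)^k\lambda^k\left(1-\frac{k}{4}\sum_{j=1}^{k-1}\frac{j}{j+1}\binom{k+j}{2j+1}\lambda^{-j-1}\right).$$
   Context: $I_k$ denotes the $k\times k$ identity matrix. The identity is one of polynomials in $\lambda$ (the right-hand side is a polynomial since $j+1\le k$). *)

(* Defs.v *)
From HB Require Import structures.
From mathcomp Require Import all_boot all_order all_algebra.
Set Implicit Arguments. Unset Strict Implicit. Unset Printing Implicit Defensive.
Import Order.TTheory GRing.Theory Num.Theory.
Local Open Scope ring_scope.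

(* A_k with entries a_ij = |i - j| / 2 (0-based indices; |i-j| is unchanged). *)
Definition A_mat (R : numFieldType) (k : nat) : 'M[R]_k :=
  \matrix_(i < k, j < k) (`|(i%:R : R) - j%:R| / 2).

Definition C_poly (R : numFieldType) (k : nat) : {poly R} :=
  \det (map_mx polyC (A_mat R k) - ('X : {poly R})%:M).

(* Main.v *)
Require Import Defs.
From HB Require Import structures.
From mathcomp Require Import all_boot all_order all_algebra.
From mathcomp Require Import zify ring lra.
Import Order.TTheory GRing.Theory Num.Theory.
Local Open Scope ring_scope.

Set Implicit Arguments. Unset Strict Implicit. Unset Printing Implicit Defensive.

Section Gen.
Variable K : comNzRingType.

Lemma sum_delta n (i : 'I_n) (F : 'I_n -> K) : \sum_j (j == i)%:R * F j = F i.
Proof.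
rewrite (bigD1 i) //= eqxx mul1r big1 ?addr0 // => j /negbTE ->; by rewrite mul0r.
Qed.

Lemma mx4 n (al be : 'I_n -> K) (q : 'I_n -> 'I_n) (X : 'M[K]_n) i j :
  let Pm := \matrix_(i, a) (al i * (a == i)%:R + be i * (a == q i)%:R) in
  (Pm *m X *m Pm^T) i j = al i * al j * X i j + al i * be j * X i (q j)
     + be i * al j * X (q i) j + be i * be j * X (q i) (q j).
Proof.
move=> Pm.
have inner : forall (c : 'I_n) (G : 'I_n -> K),
   \sum_a (al c * (a == c)%:R + be c * (a == q c)%:R) * G a = al c * G c + be c * G (q c).
  move=> c G; rewrite -(sum_delta c (fun a => al c * G a)) -(sum_delta (q c) (fun a => be c * G a)).
  rewrite -big_split /=; apply: eq_bigr => a _; ring.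
rewrite mxE.
under eq_bigr do rewrite !mxE.
have -> : \sum_b (\sum_a Pm i a * X a b) * (al j * (b == j)%:R + be j * (b == q j)%:R)
   = \sum_b (al j * (b == j)%:R + be j * (b == q j)%:R) * (al i * X i b + be i * X (q i) b).
  apply: eq_bigr => b _; rewrite mulrC; congr (_ * _).
  rewrite -(inner i (fun a => X a b)); apply: eq_bigr => a _; by rewrite mxE.
rewrite inner; ring.
Qed.

End Gen.

Section PartB.
Variable R : numFieldType.
Local Notation P := {poly R}.

Definition cc (m j : nat) : R := ('C(m + j, 2 * j + 1))%:R.

Definition U (m : nat) : P := \sum_(0 <= j < m) cc m j *: 'X^(m - j - 1).

Lemma cc_big m j : (m <= j)%N -> cc m j = 0.
Proof. by move=> h; rewrite /cc bin_small //; lia. Qed.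

Lemma natr_comb (a b c d : nat) : (a + d = b * 2 + c)%N ->
  a%:R = b%:R *+ 2 + c%:R - d%:R :> R.
Proof.
move=> H; apply/eqP; rewrite eq_sym subr_eq -(mulr_natr (b%:R)) -natrM -!natrD H //.
Qed.

Lemma U_rec m : U m.+2 = ('X *+ 2 + 1) * U m.+1 - 'X^2 * U m.
Proof.
rewrite mulrDl mul1r mulrnAl.
have E1 : 'X * U m.+1 = \sum_(0 <= j < m.+2) cc m.+1 j *: 'X^(m.+1 - j).
  rewrite big_nat_recr //= cc_big // scale0r addr0 /U mulr_sumr.
  apply: eq_big_nat => j /andP[_ hj]; rewrite -scalerAr -exprS; congr (_ *: 'X^_); lia.
have E2 : U m.+1 = \sum_(0 <= j < m.+2) (if j is j'.+1 then cc m.+1 j' else 0) *: 'X^(m.+1 - j).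
  rewrite big_nat_recl //= scale0r add0r /U.
  apply: eq_big_nat => j /andP[_ hj]; congr (_ *: 'X^_); lia.
have E3 : 'X^2 * U m = \sum_(0 <= j < m.+2) cc m j *: 'X^(m.+1 - j).
  rewrite !big_nat_recr //= !cc_big // !scale0r !addr0 /U mulr_sumr.
  apply: eq_big_nat => j /andP[_ hj]; rewrite -scalerAr -exprD; congr (_ *: 'X^_); lia.
rewrite E1 E2 E3.
rewrite -sumrMnl -!big_split -sumrB /U /=.
apply: eq_big_nat => j /andP[_ hj].
have -> : (m.+2 - j - 1 = m.+1 - j)%N by lia.
rewrite scalerMnl -scalerDl -scalerBl; congr (_ *: _).
rewrite /cc; case: j hj => [|j] hj.
  rewrite !addn0 !muln0 !bin1 ; have -> : (0:R) = 0%:R by []. apply: natr_comb; lia.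
apply: natr_comb; rewrite !mulnS !addSn !addnS !binS. lia.
Qed.


Definition dd : P := - ('X *+ 2 + 1).

Fixpoint tp (m : nat) : P :=
  if m is m1.+1 then (if m1 is m2.+1 then dd * tp m1 - 'X^2 * tp m2 else dd) else 1.

Lemma U0 : U 0 = 0. Proof. by rewrite /U big_geq. Qed.
Lemma U1 : U 1 = 1.
Proof. by rewrite /U big_nat1 /cc /= bin1 scale1r expr0. Qed.

Lemma tp_U m : tp m = (-1) ^+ m * U m.+1.
Proof.
elim: m {-2}m (leqnn m) => [|n IH] m hm.
  by move: hm; rewrite leqn0 => /eqP ->; rewrite U1 expr0 mulr1.
case: m hm => [|[|m]] hm.
- by rewrite U1 expr0 mulr1.
- by rewrite /= U_rec U1 U0 /dd mulr0 subr0 mulr1 expr1 mulN1r.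
rewrite /= -/(tp m.+1) IH // IH; last lia.
rewrite [U m.+3]U_rec [U m.+2]U_rec !exprS /dd. ring.
Qed.

Lemma XU m : 'X * U m.+1 = cc m.+1 0 *: 'X^(m.+1) +
   \sum_(0 <= j < m.+1) cc m.+1 j.+1 *: 'X^(m - j).
Proof.
rewrite /U mulr_sumr big_nat_recl // -scalerAr -exprS subn0 subn1 /=.
congr (_ + _).
rewrite big_nat_recr //= cc_big // scale0r addr0.
apply: eq_big_nat => j /andP[_ hj]; rewrite -scalerAr -exprS; congr (_ *: 'X^_); lia.
Qed.

Lemma X2U m : 'X^2 * U m.+1 = cc m.+1 0 *: 'X^(m.+2) +
   \sum_(0 <= j < m.+2) cc m.+1 j.+1 *: 'X^(m.+1 - j).
Proof.
rewrite /U mulr_sumr big_nat_recl // -scalerAr -exprD subn0 subn1 /= add2n.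
congr (_ + _).
rewrite !big_nat_recr //= !cc_big // !scale0r !addr0.
apply: eq_big_nat => j /andP[_ hj]; rewrite -scalerAr -exprD; congr (_ *: 'X^_); lia.
Qed.


Lemma bin_key a j : (j <= a)%N ->
  ((2 * j + 2) * 'C(a + j.+1, 2 * j + 2) = (a - j) * 'C(a + j.+1, 2 * j + 1))%N.
Proof.
move=> hj.
have h1 := mul_bin_diag (a + j.+1) (2 * j + 1).
have h2 := mul_bin_down (a + j.+1) (2 * j + 1).
have -> : (2 * j + 2 = (2 * j + 1).+1)%N by lia.
rewrite -h1 h2; congr (_ * _); lia.
Qed.

Lemma coef_id m j : (j < m.+2)%N ->
  ((m.+2)%:R / 4) * ((j%:R / (j.+1)%:R) * 'C(m.+2 + j, 2 * j + 1)%:R) =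
  ((m.+1)%:R / 4) * cc m.+2 j - 2^-1 * cc m.+2 j.+1 + 2^-1 * cc m.+1 j.+1 :> R.
Proof.
move=> hj.
rewrite /cc.
have -> : (m.+2 + j.+1 = (m.+1 + j.+1).+1)%N by lia.
have -> : (2 * j.+1 + 1 = (2 * j + 2).+1)%N by lia.
rewrite binS.
have -> : (m.+2 + j = m.+1 + j.+1)%N by lia.
have hj' : (j <= m.+1)%N by lia.
have hk := bin_key hj'.
have hk' : (2 * j + 2)%:R * 'C(m.+1 + j.+1, 2 * j + 2)%:R =
   ((m.+1)%:R - j%:R) * 'C(m.+1 + j.+1, 2 * j + 1)%:R :> R.
  by rewrite -natrB; [rewrite -!natrM hk | lia].
set C1 := 'C(m.+1 + j.+1, 2 * j + 1)%:R in hk' *.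
set C2 := 'C(m.+1 + j.+1, 2 * j + 2)%:R in hk' *.
set C3 := 'C(m.+1 + j.+1, (2 * j + 2).+1)%:R.
have hj1 : (j.+1)%:R != 0 :> R by rewrite pnatr_eq0.
have hC2 : C2 = ((m.+1)%:R - j%:R) * C1 / (2 * j + 2)%:R.
  rewrite -hk' mulrC mulrA mulVf ?mul1r //.
  by rewrite pnatr_eq0; lia.

rewrite natrD -/C2 -/C3 hC2 natrD natrM -[j.+1]addn1 natrD -[m.+2]addn2 -[m.+1]addn1 !natrD.
have hj2 : j%:R + 1 != 0 :> R by rewrite -[1]/(1%:R) -natrD pnatr_eq0; lia.
have hj3 : 2 * j%:R + 2 != 0 :> R.
  by rewrite -[2]/(2%:R) -natrM -natrD pnatr_eq0; lia.
have h4 : 4 != 0 :> R by rewrite pnatr_eq0.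
have h2 : 2 != 0 :> R by rewrite pnatr_eq0.
field; rewrite ?hj2 ?hj3 ?h4 ?h2 //.
Qed.


Lemma final_id m :
  (((m.+1)%:R / 4) *: 1 - 2^-1 *: 'X) * tp m.+1 - 2^-1 *: ('X^2 * tp m)
    + 2^-1 *: ((-1) ^+ m * 'X^(m.+2))
  = (-1) ^+ (m.+2) * ('X^(m.+2) - ((m.+2)%:R / 4 : R) *:
     \sum_(1 <= j < m.+2) ((j%:R / (j.+1)%:R : R) * 'C(m.+2 + j, 2 * j + 1)%:R)
                         *: 'X^(m.+2 - j - 1)).
Proof.
have h2 : 2^-1 + 2^-1 = 1 :> R.
  have h : (2:R) != 0 by rewrite pnatr_eq0.
  by field.
have e : 'X^(m.+2) = 2^-1 *: 'X^(m.+2) + 2^-1 *: 'X^(m.+2) :> P.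
  by rewrite -scalerDl h2 scale1r.
rewrite [in RHS]e.
have hS : ((m.+2)%:R / 4 : R) *:
     \sum_(1 <= j < m.+2) ((j%:R / (j.+1)%:R : R) * 'C(m.+2 + j, 2 * j + 1)%:R)
                         *: 'X^(m.+2 - j - 1) =
   ((m.+1)%:R / 4) *: U m.+2
   - 2^-1 *: (\sum_(0 <= j < m.+2) cc m.+2 j.+1 *: 'X^(m.+1 - j))
   + 2^-1 *: (\sum_(0 <= j < m.+2) cc m.+1 j.+1 *: 'X^(m.+1 - j)).
  rewrite [in RHS]/U ![in RHS]scaler_sumr -sumrB -big_split /=.

  have -> : \sum_(1 <= j < m.+2) ((j%:R / (j.+1)%:R : R) * 'C(m.+2 + j, 2 * j + 1)%:R)
                         *: 'X^(m.+2 - j - 1) =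
     \sum_(0 <= j < m.+2) ((j%:R / (j.+1)%:R : R) * 'C(m.+2 + j, 2 * j + 1)%:R)
                         *: 'X^(m.+2 - j - 1).
    by rewrite [RHS](@big_ltn _ _ _ 0) //= !mul0r scale0r add0r.
  rewrite scaler_sumr; apply: eq_big_nat => j /andP[_ hj].
  have -> : (m.+2 - j - 1 = m.+1 - j)%N by lia.
  rewrite !scalerA -scalerBl -scalerDl; congr (_ *: _).
  exact: coef_id.
rewrite hS.
have ha : \sum_(0 <= j < m.+2) cc m.+2 j.+1 *: 'X^(m.+1 - j) =
   'X * U m.+2 - cc m.+2 0 *: 'X^(m.+2) by rewrite XU addrC addKr.
have hb : \sum_(0 <= j < m.+2) cc m.+1 j.+1 *: 'X^(m.+1 - j) =
   'X^2 * U m.+1 - cc m.+1 0 *: 'X^(m.+2) by rewrite X2U addrC addKr.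
have hc2 : cc m.+2 0 = (m.+2)%:R by rewrite /cc addn0 muln0 bin1.
have hc1 : cc m.+1 0 = (m.+1)%:R by rewrite /cc addn0 muln0 bin1.
rewrite ha hb hc2 hc1 !tp_U -!mul_polyC !polyC_natr.
set Y := 'X^(m.+2). rewrite !exprS. set s := (-1) ^+ m. ring.
Qed.


End PartB.

Section PartA.
Variable R : numFieldType.
Local Notation P := {poly R}.

Definition pe (c x : R) : P := c%:P + 'X * x%:P.

Lemma pe_scale a c x : a%:P * pe c x = pe (a * c) (a * x).
Proof. by rewrite /pe !polyCM; ring. Qed.
Lemma pe_add c x c' x' : pe c x + pe c' x' = pe (c + c') (x + x').
Proof. by rewrite /pe !polyCD; ring. Qed.

Definition dn (i j : nat) := (i - j + (j - i))%N.

Lemma absE (i j : nat) : `|(i%:R : R) - j%:R| = (dn i j)%:R.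
Proof.
rewrite /dn; case: (leqP i j) => h.
  have -> : (i - j = 0)%N by lia.
  by rewrite add0n natrB // distrC ger0_norm // subr_ge0 ler_nat.
have -> : (j - i = 0)%N by lia.
by rewrite addn0 natrB ?ger0_norm // ?subr_ge0 ?ler_nat //; lia.
Qed.

Definition Bm k : 'M[P]_k := map_mx polyC (A_mat R k) - 'X%:M.

Lemma B_entry k (i j : 'I_k) : Bm k i j = pe ((dn i j)%:R / 2) (- (i == j :> nat)%:R).
Proof.
rewrite /Bm /pe !mxE absE polyCN polyC_natr mulrN; congr (_ - _).
by rewrite mulr_natr.
Qed.

Definition al k (i : 'I_k) : R := if (i : nat) == 0%N then 2^-1 else 1.
Definition be k (i : 'I_k) : R := if (i : nat) == 0%N then 2^-1 else -1.
Definition qq m (i : 'I_(m.+3)) : 'I_(m.+3) := if val i == 0%N then ord_max else inord i.-1.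
Definition Pm m : 'M[P]_(m.+3) :=
  \matrix_(i, a) ((al i)%:P * (a == i)%:R + (be i)%:P * (a == qq i)%:R).

Definition zc m (i j : nat) : R :=
  if i == 0%N then (if j == 0%N then (m.+2)%:R / 4 else 0)
  else if j == 0%N then 0 else - (i == j)%:R.
Definition zx m (i j : nat) : R :=
  if i == 0%N then (if j == 0%N then - 2^-1 else 2^-1 * ((j == 1%N)%:R - (j == m.+2)%:R))
  else if j == 0%N then 2^-1 * ((i == 1%N)%:R - (i == m.+2)%:R)
  else - (i == j)%:R *+ 2 + (i == j.+1)%:R + (j == i.+1)%:R.

Lemma natr_sub3 (a b c d : nat) : (a + b = c + d)%N -> (b%:R : R) = c%:R + d%:R - a%:R.
Proof. by move=> H; apply/eqP; rewrite eq_sym subr_eq -!natrD eqr_nat -H addnC. Qed.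

Lemma Z_entry m (i j : 'I_(m.+3)) :
  (Pm m *m Bm _ *m (Pm m)^T) i j = pe (zc m i j) (zx m i j).
Proof.
rewrite mx4 !B_entry -!polyCM !pe_scale !pe_add.
have h2 : (2 : R) != 0 by rewrite pnatr_eq0.
have h4 : (4 : R) != 0 by rewrite pnatr_eq0.
case: i => [[|i] hi]; case: j => [[|j] hj]; rewrite /al /be /qq /zc /zx /=.
- rewrite /dn /= !subn0 !sub0n !subnn !addn0 add0n eqxx /=. by congr pe; field.
- rewrite !inordK; [|lia..].
  rewrite /dn !sub0n !subn0 !add0n.
  have -> : (j.+1 - m.+2 = 0)%N by lia.
  have -> : (j - m.+2 = 0)%N by lia.
  have -> : (m.+2 - j = (m.+2 - j.+1) + 1)%N by lia.
  have -> : (m.+2 == j) = false by apply/negbTE; apply/eqP; lia.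
  have -> : (j.+1)%:R = j%:R + 1 :> R by rewrite natr1.
  rewrite (eq_sym 0%N j) !eqSS (eq_sym m.+1 j) ?add0n ?addn0 natrD.
  generalize (m.+2 - j.+1)%N (j == 0%N) (j == m.+1) => a b c.
  rewrite ?mulr0n ?oppr0; by congr pe; field.
- rewrite !inordK; [|lia..].
  rewrite /dn !sub0n !subn0 !addn0.
  have -> : (i.+1 - m.+2 = 0)%N by lia.
  have -> : (i - m.+2 = 0)%N by lia.
  have -> : (m.+2 - i = (m.+2 - i.+1) + 1)%N by lia.
  have -> : (i == m.+2) = false by apply/negbTE; apply/eqP; lia.
  have -> : (i.+1)%:R = i%:R + 1 :> R by rewrite natr1.
  rewrite !eqSS ?add0n ?addn0 natrD.
  rewrite ?mulr0n ?oppr0; by congr pe; field.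
- rewrite !inordK; [|lia..].
  have hd : dn i.+1 j.+1 = dn i j by rewrite /dn !subSS.
  rewrite hd !eqSS (eq_sym i.+1 j).
  congr pe; last by field.
  case: (eqVneq i j) => [<-|hij].
    have -> : dn i i = 0%N by rewrite /dn subnn.
    have -> : dn i.+1 i = 1%N by rewrite /dn; lia.
    have -> : dn i i.+1 = 1%N by rewrite /dn; lia.
    by rewrite ?mulr1n; field.
  have H : (dn i.+1 j + dn i j.+1 = dn i j + dn i j)%N by rewrite /dn; lia.
  by rewrite (natr_sub3 H) ?mulr0n ?oppr0; field.
Qed.



Lemma qq_val m (i : 'I_(m.+3)) : (qq i : nat) = if (i : nat) == 0%N then m.+2 else (i : nat).-1.
Proof. rewrite /qq; case: eqP => //= _; rewrite inordK //; case: i => /= i; lia. Qed.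

Lemma Pm_entry m i a : Pm m i a = (al i)%:P * ((a : nat) == i)%:R
   + (be i)%:P * ((a : nat) == (if (i : nat) == 0%N then m.+2 else (i : nat).-1))%:R.
Proof. by rewrite mxE -qq_val. Qed.

Lemma det_Pm m : \det (Pm m) = 1.
Proof.
rewrite (expand_det_row _ ord0).
have -> : \sum_j Pm m ord0 j * cofactor (Pm m) ord0 j =
   \sum_j ((j == ord0)%:R * ((2^-1)%:P * cofactor (Pm m) ord0 j)
         + (j == ord_max)%:R * ((2^-1)%:P * cofactor (Pm m) ord0 j)).
  apply: eq_bigr => j _; rewrite Pm_entry /al /be /=.
  have -> : ((j : nat) == m.+2) = (j == ord_max) by [].
  have -> : ((j : nat) == 0%N) = (j == ord0) by [].
  ring.
rewrite big_split /= !sum_delta.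
have c0 : cofactor (Pm m) ord0 ord0 = 1.
  rewrite /cofactor expr0 mul1r det_trig.
    apply: big1 => i _; rewrite 2!mxE Pm_entry /al /be !lift0 /= eqxx.
    have -> : (i.+1 == i)%N = false by lia.
    by rewrite mulr1 mulr0 addr0 polyC1.
  apply/is_trig_mxP => i j hij; rewrite 2!mxE Pm_entry !lift0 /=.
  have -> : (j.+1 == i.+1)%N = false by lia.
  have -> : (j.+1 == i)%N = false by lia.
  by rewrite !mulr0 addr0.
have c1 : cofactor (Pm m) ord0 ord_max = (-1) ^+ (m.+2) * (-1) ^+ (m.+2).
  rewrite /cofactor /= -det_tr det_trig.
    congr (_ * _); rewrite -[RHS](prodr_const_nat 0 (m.+2)) big_mkord.
    apply: eq_bigr => i _; rewrite 3!mxE (Pm_entry (lift ord0 i)) /al /be lift0 lift_max /= eqxx.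
    have -> : ((i : nat) == i.+1)%N = false by lia.
    by rewrite ?mulr0n ?mulr1n mulr0 add0r mulr1 polyCN polyC1.
  apply/is_trig_mxP => i j hij; rewrite 3!mxE (Pm_entry (lift ord0 j)) lift0 lift_max /=.
  have -> : ((i:nat) == j.+1)%N = false by lia.
  have -> : ((i:nat) == j)%N = false by lia.
  by rewrite !mulr0 addr0.
have h : 2^-1 + 2^-1 = 1 :> R.
  have h2 : (2:R) != 0 by rewrite pnatr_eq0.
  by field.
by rewrite c0 c1 -expr2 sqrr_sign !mulr1 -polyCD h.
Qed.


Lemma detB_Z m : \det (Bm (m.+3)) = \det (\matrix_(i, j) pe (zc m i j) (zx m i j) : 'M[P]_(m.+3)).
Proof.
have <- : Pm m *m Bm _ *m (Pm m)^T = \matrix_(i, j) pe (zc m i j) (zx m i j).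
  by apply/matrixP => i j; rewrite Z_entry mxE.
by rewrite !det_mulmx det_tr det_Pm mul1r mulr1.
Qed.

Definition tf (i j : nat) : P :=
  pe (- (i == j)%:R) (- (i == j)%:R *+ 2 + (i == j.+1)%:R + (j == i.+1)%:R).

Lemma tfE i j : tf i j = if i == j then dd R else if (i == j.+1) || (j == i.+1) then 'X else 0.
Proof.
rewrite /tf /pe /dd; case: (eqVneq i j) => [<-|hij].
  have -> : (i == i.+1) = false by lia.
  rewrite ?mulr1n ?mulr0n ?addr0 polyCN polyC1 polyCMn polyCN polyC1; ring.
case: (eqVneq i j.+1) => [->|h1].
  have -> : (j == j.+2) = false by lia.
  by rewrite /= ?mulr0n ?mulr1n ?oppr0 ?mul0rn ?add0r ?addr0 ?polyC0 ?polyC1 ?mulr1 ?add0r.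
case: (eqVneq j i.+1) => [hj|h2].
  by rewrite /= ?mulr0n ?mulr1n ?oppr0 ?mul0rn ?add0r ?addr0 ?polyC0 ?polyC1 ?mulr1 ?add0r.
by rewrite /= ?mulr0n ?mulr1n ?oppr0 ?mul0rn ?add0r ?addr0 ?polyC0 ?polyC1 ?mulr0 ?add0r.
Qed.


Definition Tm n : 'M[P]_n := \matrix_(i, j) tf i j.

Lemma tfS i j : tf i.+1 j.+1 = tf i j.
Proof. by rewrite /tf !eqSS. Qed.

Lemma liftv n (i : 'I_n.+1) (j : 'I_n) : (lift i j : nat) = if (i <= j)%N then j.+1 else j.
Proof. by rewrite /= /bump; case: leqP => h; rewrite ?add1n ?add0n. Qed.

Lemma detT n : \det (Tm n) = tp R n.
Proof.
elim: n {-2}n (leqnn n) => [|n IH] k hk.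
  by move: hk; rewrite leqn0 => /eqP ->; rewrite det_mx00.
case: k hk => [|[|k]] hk.
- by rewrite det_mx00.
- by rewrite det_mx11 mxE tfE.
have i1lt : (1 < k.+2)%N by [].
pose i1 := Ordinal i1lt.
rewrite (expand_det_row _ ord0).
have -> : \sum_j Tm k.+2 ord0 j * cofactor (Tm k.+2) ord0 j =
   \sum_j ((j == ord0)%:R * (dd R * cofactor (Tm k.+2) ord0 j)
         + (j == i1)%:R * ('X * cofactor (Tm k.+2) ord0 j)).
  apply: eq_bigr => j _; rewrite mxE tfE.
  have -> : (j == ord0) = ((j : nat) == 0%N) by [].
  have -> : (j == i1) = ((j : nat) == 1%N) by [].
  case: j => [[|[|j]] hj] /=; rewrite ?mulr0n ?mulr1n; ring.
rewrite big_split /= !sum_delta.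
have c0 : cofactor (Tm k.+2) ord0 ord0 = tp R k.+1.
  rewrite /cofactor expr0 mul1r -(IH k.+1); last lia.
  by congr (\det _); apply/matrixP => i j; rewrite !mxE !lift0 tfS.
have c1 : cofactor (Tm k.+2) ord0 i1 = - ('X * tp R k).
  rewrite /cofactor expr1 mulN1r; congr (- _).
  rewrite (expand_det_col _ ord0).
  have -> : \sum_i row' ord0 (col' i1 (Tm k.+2)) i ord0 *
      cofactor (row' ord0 (col' i1 (Tm k.+2))) i ord0 =
    \sum_i (i == ord0)%:R * ('X * cofactor (row' ord0 (col' i1 (Tm k.+2))) i ord0).
    apply: eq_bigr => i _; rewrite !mxE lift0 liftv /= tfE.
    have -> : (i == ord0) = ((i : nat) == 0%N) by [].
    case: i => [[|i] hi] /=; rewrite ?mulr0n ?mulr1n; ring.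
  rewrite sum_delta /cofactor expr0 mul1r -(IH k); last lia.
  congr (_ * \det _); apply/matrixP => i j; rewrite !mxE !lift0 !liftv /= !tfS.
  by [].
rewrite c0 c1 /=; ring.
Qed.


Lemma det_eqT n (M : 'M[P]_n) : (forall i j : 'I_n, M i j = tf i j) -> \det M = tp R n.
Proof. by move=> h; rewrite -detT; congr (\det _); apply/matrixP => i j; rewrite h mxE. Qed.

Lemma det_low n (M : 'M[P]_n) : (forall i j : 'I_n, M i j = tf i j.+1) -> \det M = 'X^n.
Proof.
move=> h; rewrite det_trig.
  rewrite (eq_bigr (fun _ => 'X)); last by move=> i _; rewrite h tfE; case: eqP; [lia|rewrite eqxx orbT].
  by rewrite prodr_const card_ord.
apply/is_trig_mxP => i j hij; rewrite h tfE.
have -> : ((i : nat) == j.+1) = false by lia.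
have -> : ((j.+1 : nat) == i.+1) = false by lia.
by have -> : ((i : nat) == j.+2) = false by lia.
Qed.

Lemma det_up n (M : 'M[P]_n) : (forall i j : 'I_n, M i j = tf i.+1 j) -> \det M = 'X^n.
Proof.
move=> h; rewrite -det_tr; apply: det_low => i j; rewrite mxE h !tfE.
by rewrite (eq_sym (j.+1 : nat)) orbC.
Qed.


Definition hX : P := (2^-1)%:P * 'X.
Definition Zm m : 'M[P]_(m.+3) := \matrix_(i, j) pe (zc m i j) (zx m i j).
Definition z00 m : P := pe ((m.+2)%:R / 4) (- 2^-1).

Lemma Zcol m (i : nat) : pe (zc m i.+1 0) (zx m i.+1 0) =
  (i == 0%N)%:R * hX - (i == m.+1)%:R * hX.
Proof. by rewrite /zc /zx /= /pe /hX !eqSS polyC0 add0r polyCM polyCB !polyC_natr; ring. Qed.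

Lemma Zrow m (j : nat) : pe (zc m 0 j.+1) (zx m 0 j.+1) =
  (j == 0%N)%:R * hX - (j == m.+1)%:R * hX.
Proof. by rewrite /zc /zx /= /pe /hX !eqSS polyC0 add0r polyCM polyCB !polyC_natr; ring. Qed.

Lemma Zint m (i j : nat) : pe (zc m i.+1 j.+1) (zx m i.+1 j.+1) = tf i j.
Proof. by rewrite -tfS. Qed.

Lemma detZ m : \det (Zm m) = z00 m * tp R m.+2
   - hX * (hX * tp R m.+1 - hX * ((-1) ^+ (m.+1) * 'X^(m.+1)))
   - hX * ((-1) ^+ (m.+2) * (hX * 'X^(m.+1) - hX * ((-1) ^+ (m.+1) * tp R m.+1))).
Proof.
have i1lt : (1 < m.+3)%N by [].
pose i1 := Ordinal i1lt.
rewrite (expand_det_row _ ord0).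
have -> : \sum_j Zm m ord0 j * cofactor (Zm m) ord0 j =
   \sum_j ((j == ord0)%:R * (z00 m * cofactor (Zm m) ord0 j)
         + (j == i1)%:R * (hX * cofactor (Zm m) ord0 j)
         - (j == ord_max)%:R * (hX * cofactor (Zm m) ord0 j)).
  apply: eq_bigr => j _; rewrite mxE.
  case: j => [[|j] hj].
    have -> : (Ordinal hj == i1) = false by [].
    have -> : (Ordinal hj == ord_max) = false by [].
    have -> : (Ordinal hj == ord0) = true by [].
    by rewrite /z00 /= ?mulr0n ?mulr1n; ring.
  rewrite Zrow.
  have -> : (Ordinal hj == i1) = (j == 0%N) by [].
  have -> : (Ordinal hj == ord_max) = (j == m.+1) by [].
  have -> : (Ordinal hj == ord0) = false by [].
  by rewrite ?mulr0n; ring.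
rewrite sumrB big_split !sum_delta.
have c0 : cofactor (Zm m) ord0 ord0 = tp R m.+2.
  rewrite /cofactor expr0 mul1r; apply: det_eqT => i j.
  by rewrite !mxE !lift0 Zint.
have c1 : cofactor (Zm m) ord0 i1 = - (hX * tp R m.+1 - hX * ((-1) ^+ (m.+1) * 'X^(m.+1))).
  rewrite /cofactor expr1 mulN1r; congr (- _).
  rewrite (expand_det_col _ ord0).
  set N := row' ord0 (col' i1 (Zm m)).
  have -> : \sum_i N i ord0 * cofactor N i ord0 =
      \sum_i ((i == ord0)%:R * (hX * cofactor N i ord0)
            - (i == ord_max)%:R * (hX * cofactor N i ord0)).
    apply: eq_bigr => i _; rewrite !mxE lift0 liftv /= Zcol.
    have -> : (i == ord0) = ((i : nat) == 0%N) by [].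
    have -> : (i == ord_max) = ((i : nat) == m.+1) by [].
    ring.
  rewrite sumrB !sum_delta.
  congr (hX * _ - hX * _).
    rewrite /cofactor expr0 mul1r; apply: det_eqT => i j.
    by rewrite !mxE /= /bump /= !add1n Zint tfS.
  rewrite /cofactor /= addn0; congr (_ * _); apply: det_low => i j.
  have hi : (m < i)%N = false by rewrite ltnNge -ltnS ltn_ord.
  by rewrite !mxE /= /bump /= hi add0n !add1n Zint.
have c2 : cofactor (Zm m) ord0 ord_max =
    (-1) ^+ (m.+2) * (hX * 'X^(m.+1) - hX * ((-1) ^+ (m.+1) * tp R m.+1)).
  rewrite /cofactor /= add0n; congr (_ * _).
  rewrite (expand_det_col _ ord0).
  set N := row' ord0 (col' ord_max (Zm m)).
  have -> : \sum_i N i ord0 * cofactor N i ord0 =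
      \sum_i ((i == ord0)%:R * (hX * cofactor N i ord0)
            - (i == ord_max)%:R * (hX * cofactor N i ord0)).
    apply: eq_bigr => i _; rewrite !mxE lift0 lift_max /= Zcol.
    have -> : (i == ord0) = ((i : nat) == 0%N) by [].
    have -> : (i == ord_max) = ((i : nat) == m.+1) by [].
    ring.
  rewrite sumrB !sum_delta.
  congr (hX * _ - hX * _).
    rewrite /cofactor expr0 mul1r; apply: det_up => i j.
    have hj : (m < j)%N = false by rewrite ltnNge -ltnS ltn_ord.
    by rewrite !mxE /= /bump /= !add1n ltnS hj add0n Zint.
  rewrite /cofactor /= addn0; congr (_ * _); apply: det_eqT => i j.
  have hi : (m < i)%N = false by rewrite ltnNge -ltnS ltn_ord.
  have hj : (m < j)%N = false by rewrite ltnNge -ltnS ltn_ord.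
  by rewrite !mxE /= /bump /= hi !add1n ltnS hj !add0n Zint.
rewrite c0 c1 c2; move: (tp R m.+2) (tp R m.+1) ('X^(m.+1)) => t2 t1 Y /=.
by rewrite !exprS; ring.
Qed.


Lemma bridge m :
  z00 m * tp R m.+2
   - hX * (hX * tp R m.+1 - hX * ((-1) ^+ (m.+1) * 'X^(m.+1)))
   - hX * ((-1) ^+ (m.+2) * (hX * 'X^(m.+1) - hX * ((-1) ^+ (m.+1) * tp R m.+1)))
  = (((m.+2)%:R / 4) *: 1 - 2^-1 *: 'X) * tp R m.+2 - 2^-1 *: ('X^2 * tp R m.+1)
    + 2^-1 *: ((-1) ^+ (m.+1) * 'X^(m.+3)).
Proof.
have hh : (2^-1 * 2^-1) *+ 2 = 2^-1 :> R.
  have h2 : (2:R) != 0 by rewrite pnatr_eq0.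
  by field.
have hP : (2^-1)%:P * (2^-1)%:P *+ 2 = (2^-1)%:P :> P by rewrite -polyCM -polyCMn hh.
rewrite /z00 /pe /hX.
move: (tp R m.+2) (tp R m.+1) => t2 t1.
have eX : 'X^(m.+3) = 'X^2 * 'X^(m.+1) :> P by rewrite -exprD.
rewrite eX; move: ('X^(m.+1)) => Y.
rewrite -!mul_polyC [(-1) ^+ m.+2]exprS polyCN -signr_odd.
case: (odd m.+1); rewrite ?expr1 ?expr0.
  transitivity (((m.+2)%:R / 4)%:P * t2 - (2^-1)%:P * ('X * t2)
    - ((2^-1)%:P * (2^-1)%:P *+ 2) * ('X^2 * t1) + ((2^-1)%:P * (2^-1)%:P *+ 2) * (-1 * ('X^2 * Y))).
    ring.
  rewrite hP; ring.
transitivity (((m.+2)%:R / 4)%:P * t2 - (2^-1)%:P * ('X * t2)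
  - ((2^-1)%:P * (2^-1)%:P *+ 2) * ('X^2 * t1) + ((2^-1)%:P * (2^-1)%:P *+ 2) * (1 * ('X^2 * Y))).
  ring.
rewrite hP; ring.
Qed.

End PartA.

Lemma mainA (R : numFieldType) m : C_poly R (m.+3) =
  (((m.+2)%:R / 4) *: 1 - 2^-1 *: 'X) * tp R m.+2 - 2^-1 *: ('X^2 * tp R m.+1)
    + 2^-1 *: ((-1) ^+ (m.+1) * 'X^(m.+3)).
Proof.
have -> : C_poly R m.+3 = \det (Bm R m.+3) by [].
by rewrite detB_Z -/(Zm R m) detZ bridge.
Qed.


Unset Implicit Arguments.

Theorem theorem2p2 (R : numFieldType) (k : nat) (hk : (1 <= k)%N) :
  C_poly R k =
  (-1) ^+ k * ('X^k - (k%:R / 4 : R) *: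
     \sum_(1 <= j < k) ((j%:R / (j.+1)%:R : R) * 'C(k + j, 2 * j + 1)%:R)
                         *: 'X^(k - j - 1)).
Proof.
case: k hk => [//|[|[|m]]] _.
- rewrite big_geq // scaler0 subr0 expr1 mulN1r.
  have -> : C_poly R 1 = \det (Bm R 1) by [].
  by rewrite det_mx11 B_entry /pe /dn /= mul0r polyC0 add0r polyCN polyC1 expr1 mulrN1.
- have -> : C_poly R 2 = \det (Bm R 2) by [].
  rewrite (expand_det_row _ ord0) !big_ord_recr big_ord0 /= add0r.
  rewrite /cofactor !det_mx11 !mxE !absE /dn /bump /= big_nat1 /= !subnn ?sub0n ?subn0 ?addn0 ?add0n.
  have -> : 'C(2 + 1, 2 * 1 + 1) = 1%N by [].
  rewrite scalerA.
  have -> : (2 / 4 * (1 / 2 * 1%:R)) = (1 / 2) * (1 / 2) :> R.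
    have h2 : (2:R) != 0 by rewrite pnatr_eq0. by field.
  rewrite -!mul_polyC !polyCM ?polyC1 ?polyC0; ring.
- by rewrite mainA final_id.
Qed.
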